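(* (1) For every partition $\alpha$ there is an object $N_\alpha(\mathbb Z)=(V,\varphi)$ of $\mathcal N(\mathbb Z)$ such that $N_\alpha(\mathbb Z)\otimes_{\mathbb Z}k\cong N_\alpha(k)$ for every field $k$; moreover $V$ has a $\mathbb Z$-basis in which the matrix of $\varphi$ has all entries in $\{0,1\}$. (2) For every Klein tableau $\Pi$ with entries at most $2$ there is an object $M_\Pi(\mathbb Z)=(V,W,\psi)$ of $\mathcal S(\mathbb Z)$ such that $M_\Pi(\mathbb Z)\otimes_{\mathbb Z}k\cong M_\Pi(k)$ for every field $k$; moreover there are $\mathbb Z$-bases of $V$ and $W$ in which the matrix of $\psi$ has all entries in $\{0,1\}$.
   Context: For a field $k$ and a partition $\alpha$, $N_\alpha(k)=\bigoplus_ik[T]/(T^{\alpha_i})$, viewed as the pair (vector space, nilpotent operator $T$). $\mathcal N(\mathbb Z)$ is the category of pairs $(V,\varphi)$ with $V$ a finitely generated free abelian group and $\varphi$ a nilpotent endomorphism of $V$; $\mathcal S(\mathbb Z)$ is the category of triples $(V,W,\psi)$ with $(V,\varphi),(W,\varphi')$ in $\mathcal N(\mathbb Z)$ and $\psi$ a morphism ($\varphi'\psi=\psi\varphi$). $(V,\varphi)\otimes_{\mathbb Z}k=(V\otimes_{\mathbb Z}k,\varphi\otimes\mathrm{id})$, and similarly for triples. A Klein tableau of type $(\alpha,\beta,\gamma)$ with entries at most $2$ is a filling of the skew Young diagram $\beta\setminus\gamma$ (columns of lengths $\beta_i$, rows numbered from the top; $\bar\alpha$ the conjugate partition) with $\bar\alpha_1$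 entries $1$ and $\bar\alpha_2$ entries $2_r$, weakly increasing along rows, strictly increasing down columns, satisfying the lattice permutation property (for each $c\ge0$ at most as many $2$'s as $1$'s right of column $c$), such that each $2_r$ in row $m$ has $1\le r\le m-1$, $r=m-1$ if the box above contains $1$, and the number of $2_r$'s is at most the number of $1$'s in row $r$. $M_\Pi(k)$ denotes the object $(N_\alpha(k),N_\beta(k),f)$ ($f$ an injective $k[T]$-map with cokernel $\cong N_\gamma(k)$) corresponding to $\Pi$ under the known bijection between isomorphism classes of such embeddings (with $\alpha_1\le 2$) and Klein tableaux; explicitly $M_\Pi(k)$ is a direct sum of pickets $(N_{(\ell)},N_{(m)},\text{inclusion})$, $\ell\le\min\{2,m\}$, and bipickets $(N_{(2)},N_{(m,r)},\delta)$, $1\le r\le m-2$, $\delta(1)=(T^{m-2},T^{r-1})$, determined by $\Pi$. *)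

(* Defs.v *)
From HB Require Import structures.
From mathcomp Require Import all_boot all_order all_algebra.
Set Implicit Arguments. Unset Strict Implicit. Unset Printing Implicit Defensive.
Import Order.TTheory GRing.Theory Num.Theory.
Local Open Scope ring_scope.

Definition is_partition (s : seq nat) : bool :=
  sorted geq s && all (fun a => 0 < a)%N s.

(* An object (V, phi) of N(Z) (resp. a pair over a field k) is represented by
   V = R^n with its standard basis and phi : v |-> v *m A. *)
Definition nilpmx (R : nzRingType) n (A : 'M[R]_n) : Prop :=
  exists e : nat, iter e (fun X => X *m A) 1%:M = 0.

(* N_(m)(k) = k[T]/(T^m) in the basis 1, T, ..., T^(m-1): T maps e_i to e_(i+1) *)
Definition jblock (R : nzRingType) (m : nat) : 'M[R]_m :=
  \matrix_(i < m, j < m) (j == i.+1 :> nat)%:R.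

Fixpoint jordan (R : nzRingType) (s : seq nat) : 'M[R]_(sumn s) :=
  match s return 'M[R]_(sumn s) with
  | [::] => 0
  | m :: s' => block_mx (jblock R m) 0 0 (jordan R s')
  end.

Definition niso (K : fieldType) n m (A : 'M[K]_n) (B : 'M[K]_m) : Prop :=
  exists P : 'M[K]_(n, m), [/\ row_free P, row_full P & A *m P = P *m B].

Record trip (R : nzRingType) := Trip {
  tn : nat; tm : nat;
  tA : 'M[R]_tn;          (* operator on V *)
  tB : 'M[R]_tm;          (* operator on W *)
  tPsi : 'M[R]_(tn, tm)   (* psi : V -> W, v |-> v *m tPsi *)
}.

Definition trip0 (R : nzRingType) : trip R := @Trip R 0 0 0 0 0.

Definition dsum (R : nzRingType) (t1 t2 : trip R) : trip R :=
  @Trip R (tn t1 + tn t2) (tm t1 + tm t2)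
    (block_mx (tA t1) 0 0 (tA t2))
    (block_mx (tB t1) 0 0 (tB t2))
    (block_mx (tPsi t1) 0 0 (tPsi t2)).

Definition tiso (K : fieldType) (t1 t2 : trip K) : Prop :=
  exists (P : 'M[K]_(tn t1, tn t2)) (Q : 'M[K]_(tm t1, tm t2)),
    [/\ row_free P && row_full P, row_free Q && row_full Q,
        tA t1 *m P = P *m tA t2, tB t1 *m Q = Q *m tB t2
      & tPsi t1 *m Q = P *m tPsi t2].

(* pickets (N_(l), N_(m), inclusion), the inclusion sending 1 to T^(m-l) *)
Definition picket (R : nzRingType) (l m : nat) : trip R :=
  @Trip R l m (jblock R l) (jblock R m)
    (\matrix_(i < l, j < m) (j == (i + (m - l))%N :> nat)%:R).

(* bipickets (N_(2), N_(m,r), delta) with delta(1) = (T^(m-2), T^(r-1)) *)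
Definition bipicket (R : nzRingType) (m r : nat) : trip R :=
  @Trip R 2 (m + r) (jblock R 2) (block_mx (jblock R m) 0 0 (jblock R r))
    (\matrix_(i < 2, j < m + r)
       (((i == 0%N :> nat) && ((j == (m - 2)%N :> nat) || (j == (m + r - 1)%N :> nat)))
        || ((i == 1%N :> nat) && (j == (m - 1)%N :> nat)))%:R).

Inductive piece := Pick of nat & nat | Bip of nat & nat.

Definition piece_trip (R : nzRingType) (p : piece) : trip R :=
  match p with
  | Pick l m => picket R l m
  | Bip m r => bipicket R m r
  end.

(* entries: One = 1, Two r = 2_r *)
Inductive entry := One | Two of nat.

Definition entry_val (e : entry) : nat := if e is One then 1 else 2.
Definition is_one (e : entry) : bool := if e is One then true else false.
Definition is_two (e : entry) : bool := if e is Two _ then true else false.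
Definition is_two_r (r : nat) (e : entry) : bool :=
  if e is Two r' then r' == r else false.

(* A Klein tableau of type (alpha, beta, gamma): columns are indexed by
   j < size beta (0-based, left to right), column j has length beta_j = nth 0 beta j;
   rows are numbered from the top starting at 1.  The filling is a function
   kf : row -> column -> entry, only its values on boxes of beta \ gamma matter. *)
Record ktab := KTab {
  kalpha : seq nat; kbeta : seq nat; kgamma : seq nat;
  kf : nat -> nat -> entry }.

Definition inskew (b c : seq nat) (i j : nat) : bool :=
  [&& (j < size b)%N, (nth 0 c j < i)%N & (i <= nth 0 b j)%N].

Definition nboxes (b c : seq nat) (P : nat -> nat -> bool) : nat :=
  (\sum_(j < size b) \sum_(1 <= i < (nth 0 b 0).+1 | inskew b c i j) (P i j : nat))%N.

Definition is_klein2 (T : ktab) : Prop :=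
  let a := kalpha T in let b := kbeta T in let c := kgamma T in let f := kf T in
  [/\ is_partition a, is_partition b & is_partition c] /\
      ((size c <= size b)%N /\ (forall j, nth 0 c j <= nth 0 b j)%N) /\
      all (fun x => x <= 2)%N a /\
      (* conj(alpha)_1 entries 1 and conj(alpha)_2 entries 2_r *)
      (nboxes b c (fun i j => is_one (f i j)) = count (fun x => 1 <= x)%N a
        /\ nboxes b c (fun i j => is_two (f i j)) = count (fun x => 2 <= x)%N a) /\
      (forall i j j', inskew b c i j -> inskew b c i j' -> (j < j')%N ->
          (entry_val (f i j) <= entry_val (f i j'))%N) /\
      (forall i i' j, inskew b c i j -> inskew b c i' j -> (i < i')%N ->
          (entry_val (f i j) < entry_val (f i' j))%N) /\
      (* lattice permutation property: for each c0, right of column c0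
         (i.e. 0-based column index j >= c0) at most as many 2's as 1's *)
      (forall c0 : nat,
          (nboxes b c (fun i j => (c0 <= j)%N && is_two (f i j))
           <= nboxes b c (fun i j => (c0 <= j)%N && is_one (f i j)))%N) /\
      (forall i j r, inskew b c i j -> f i j = Two r ->
          [/\ (1 <= r <= i.-1)%N,
              (inskew b c i.-1 j -> f i.-1 j = One -> r = i.-1)
            & (nboxes b c (fun i' j' => is_two_r r (f i' j'))
               <= nboxes b c (fun i' j' => (i' == r) && is_one (f i' j')))%N]).

Section MPi.
Variable T : ktab.
Let b := kbeta T.
Let c := kgamma T.
Let f := kf T.
Let N := nth 0 b 0.   (* number of rows *)

Definition ones_row (m : nat) : nat := nboxes b c (fun i j => (i == m) && is_one (f i j)).
Definition twos_in (m r : nat) : nat := nboxes b c (fun i j => (i == m) && is_two_r r (f i j)).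
Definition twos_r (r : nat) : nat := nboxes b c (fun i j => is_two_r r (f i j)).

Definition mult_P2 (m : nat) : nat := twos_in m m.-1.
Definition mult_B (m r : nat) : nat := if (1 <= r)%N && (r + 2 <= m)%N then twos_in m r else 0%N.
Definition mult_P1 (m : nat) : nat := (ones_row m - twos_r m)%N.
Definition mult_P0 (m : nat) : nat :=
  (count_mem m b - (mult_P1 m + mult_P2 m + \sum_(1 <= r < N.+1) mult_B m r
                    + \sum_(1 <= m' < N.+1) mult_B m' m))%N.

Definition pieces : seq piece :=
  flatten [seq nseq (mult_P0 m) (Pick 0 m) ++ nseq (mult_P1 m) (Pick 1 m)
               ++ (if (2 <= m)%N then nseq (mult_P2 m) (Pick 2 m) else [::])
               ++ flatten [seq nseq (mult_B m r) (Bip m r) | r <- iota 1 N]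
          | m <- iota 1 N].

End MPi.

Definition M_Pi (K : fieldType) (T : ktab) : trip K :=
  foldr (@dsum K) (trip0 K) (map (piece_trip K) (pieces T)).

Definition toK (K : fieldType) n m (A : 'M[int]_(n, m)) : 'M[K]_(n, m) :=
  map_mx (fun z : int => z%:~R) A.

Definition zero_one n m (A : 'M[int]_(n, m)) : Prop :=
  forall i j, A i j = 0 \/ A i j = 1.

(* Main.v *)
Require Import Defs.
From HB Require Import structures.
From mathcomp Require Import all_boot all_order all_algebra.
From mathcomp Require Import zify.
Import GRing.Theory.
Local Open Scope ring_scope.

Lemma iter_mul0 (R : nzRingType) n (A : 'M[R]_n) e d :
  iter e (fun X => X *m A) 1%:M = 0 -> iter (d + e) (fun X => X *m A) 1%:M = 0.
Proof. move=> H; elim: d => [|d IH] //=; by rewrite IH mul0mx. Qed.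

Lemma iter_block (R : nzRingType) n1 n2 (A : 'M[R]_n1) (B : 'M[R]_n2) e :
  iter e (fun X => X *m block_mx A 0 0 B) 1%:M =
  block_mx (iter e (fun X => X *m A) 1%:M) 0 0 (iter e (fun X => X *m B) 1%:M).
Proof.
elim: e => [|e IH] /=; first exact: scalar_mx_block.
by rewrite IH mulmx_block !mulmx0 !mul0mx !addr0 !add0r.
Qed.

Lemma nilp_block (R : nzRingType) n1 n2 (A : 'M[R]_n1) (B : 'M[R]_n2) :
  nilpmx A -> nilpmx B -> nilpmx (block_mx A 0 0 B).
Proof.
move=> [e1 H1] [e2 H2]; exists (e1 + e2)%N; rewrite iter_block.
have E1 := @iter_mul0 _ _ _ _ e2 H1; have E2 := @iter_mul0 _ _ _ _ e1 H2.
by rewrite (addnC e2 e1) in E1; rewrite E1 E2 block_mx0.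
Qed.

Lemma sum_deltal (R : nzRingType) n c (H : nat -> R) :
  \sum_(k < n) ((k == c :> nat)%:R * H k) = if (c < n)%N then H c else 0.
Proof.
elim: n => [|n IH]; first by rewrite big_ord0.
rewrite big_ord_recr /= IH.
case: (ltngtP c n) => Hc.
- by rewrite mul0r addr0 ltnS ltnW.
- by rewrite mul0r addr0 ltnS leqNgt Hc.
- by rewrite mul1r add0r Hc ltnSn.
Qed.

Lemma sum_deltar (R : nzRingType) n c (H : nat -> R) :
  \sum_(k < n) (H k * (k == c :> nat)%:R) = if (c < n)%N then H c else 0.
Proof.
rewrite -(@sum_deltal _ n c H); apply: eq_bigr => k _.
by case: (k == c :> nat); rewrite ?mulr0 ?mul0r ?mulr1 ?mul1r.
Qed.

Lemma jblock_pow (R : nzRingType) m e :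
  iter e (fun X => X *m jblock R m) 1%:M =
  \matrix_(i < m, j < m) (j == (i + e)%N :> nat)%:R.
Proof.
elim: e => [|e IH] /=.
  by apply/matrixP => i j; rewrite !mxE addn0 eq_sym.
apply/matrixP => i j; rewrite !mxE IH.
under eq_bigr do rewrite !mxE.

rewrite (@sum_deltal _ m (i + e)%N (fun k => (j == k.+1 :> nat)%:R)) addnS.
case: ifP => // H; case: eqP => // E; have := ltn_ord j; rewrite E; lia.
Qed.

Lemma nilp_jblock (R : nzRingType) m : nilpmx (jblock R m).
Proof.
exists m; rewrite jblock_pow; apply/matrixP => i j; rewrite !mxE.
by case: eqP => // H; have := ltn_ord j; rewrite H; lia.
Qed.
Lemma b2R (R : nzRingType) (b1 b2 : bool) : b1 = b2 -> (b1%:R : R) = b2%:R.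
Proof. by move=> ->. Qed.
Lemma R0b (R : nzRingType) : (0 : R) = false%:R.
Proof. by rewrite mulr0n. Qed.

Lemma picket_comm (R : nzRingType) l m :
  let t := picket R l m in tA t *m tPsi t = tPsi t *m tB t.
Proof.
rewrite /=; apply/matrixP => i j; rewrite !mxE.
under eq_bigr do rewrite !mxE.
rewrite (@sum_deltal _ l i.+1 (fun k => (j == (k + (m - l))%N :> nat)%:R)).
under [RHS]eq_bigr do rewrite !mxE.
rewrite (@sum_deltal _ m (i + (m - l))%N (fun k => (j == k.+1 :> nat)%:R)).
have := ltn_ord i; have := ltn_ord j.
case: ifP => H1; case: ifP => H2 Hj Hi //; try congr (_%:R).
all: try (apply/eqP/eqP; lia).
all: case: eqP => //; move: H1 H2; lia.
Qed.

Lemma jblock2 (R : nzRingType) m r :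
  block_mx (jblock R m) 0 0 (jblock R r) =
  \matrix_(k < m + r, j < m + r) ((j == k.+1 :> nat) && (j != m :> nat))%:R.
Proof.
apply/matrixP => k j; rewrite !mxE.
case: (splitP k) => k' Hk; rewrite !mxE; case: (splitP j) => j' Hj; rewrite !mxE Hk Hj.
- case: eqP => E //=; have := ltn_ord j'; rewrite E; case: eqP => //; lia.
- case: eqP => E //=; have := ltn_ord k'; case: eqP => //; lia.
- case: eqP => E //=; have := ltn_ord j'; case: eqP => //; lia.
- have -> : (m + j' == (m + k').+1)%N = (j' == k'.+1 :> nat) by lia.
  case: eqP => //=; case: eqP => //; lia.
Qed.

Lemma bipicket_comm (R : nzRingType) m r : (1 <= r)%N -> (r + 2 <= m)%N ->
  let t := bipicket R m r in tA t *m tPsi t = tPsi t *m tB t.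
Proof.
move=> Hr Hm; rewrite /= jblock2; apply/matrixP => i j; rewrite !mxE.
under eq_bigr do rewrite !mxE.
rewrite (@sum_deltal _ 2 i.+1 (fun k => ((((k == 0%N :> nat) && ((j == (m - 2)%N :> nat) || (j == (m + r - 1)%N :> nat)))
        || ((k == 1%N :> nat) && (j == (m - 1)%N :> nat)))%:R))).
under [RHS]eq_bigr do rewrite !mxE.
rewrite (eq_bigr (fun k : 'I_(m + r) => ((((i == 0%N :> nat) && ((k == (m - 2)%N :> nat) || (k == (m + r - 1)%N :> nat)))
        || ((i == 1%N :> nat) && (k == (m - 1)%N :> nat)))%:R * (k == j.-1 :> nat)%:R) * ((0 < j)%N && (j != m :> nat))%:R)); last first.
  move=> k _; rewrite -mulrA -!natrM !mulnb; apply: b2R.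
  by apply/idP/idP; lia.
rewrite -big_distrl /=.
rewrite (@sum_deltar _ (m + r) j.-1 (fun k => ((((i == 0%N :> nat) && ((k == (m - 2)%N :> nat) || (k == (m + r - 1)%N :> nat)))
        || ((i == 1%N :> nat) && (k == (m - 1)%N :> nat)))%:R))).
have := ltn_ord i; have := ltn_ord j => Hj Hi.
case: ifP => H1; case: ifP => H2; rewrite ?mul0r -?natrM ?mulnb ?R0b; apply: b2R;
  apply/idP/idP; move: H1 H2; lia.
Qed.

Lemma nilp0 (R : nzRingType) : nilpmx (0 : 'M[R]_0).
Proof. by exists 1%N; rewrite /= mulmx0. Qed.

Lemma toK_bool (K : fieldType) n m (P : 'I_n -> 'I_m -> bool) :
  toK K (\matrix_(i, j) (P i j)%:R) = \matrix_(i, j) (P i j)%:R.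
Proof. by apply/matrixP => i j; rewrite !mxE; case: (P i j). Qed.

Lemma zo_bool n m (P : 'I_n -> 'I_m -> bool) :
  zero_one (\matrix_(i, j) ((P i j)%:R : int)).
Proof. by move=> i j; rewrite !mxE; case: (P i j); [right|left]. Qed.

Lemma zo0 n m : zero_one (0 : 'M[int]_(n, m)).
Proof. by move=> i j; rewrite mxE; left. Qed.

Lemma zo_block n1 n2 m1 m2 (A : 'M[int]_(n1, m1)) (B : 'M[int]_(n2, m2)) :
  zero_one A -> zero_one B -> zero_one (block_mx A 0 0 B).
Proof.
move=> HA HB i j; rewrite !mxE.
case: (splitP i) => i' _; rewrite ?mxE; case: (splitP j) => j' _; rewrite ?mxE; by [apply: HA | apply: HB | left].
Qed.

Lemma toK_block (K : fieldType) n1 n2 m1 m2 (A : 'M[int]_(n1, m1)) (B : 'M[int]_(n2, m2)) :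
  toK K (block_mx A 0 0 B) = block_mx (toK K A) 0 0 (toK K B).
Proof. by rewrite /toK map_block_mx !map_mx0. Qed.

Lemma jordan_nilp (R : nzRingType) s : nilpmx (jordan R s).
Proof. elim: s => [|m s IH] /=; [exact: nilp0 | exact: nilp_block (nilp_jblock _ _) IH]. Qed.

Lemma jordan_toK (K : fieldType) s : toK K (jordan int s) = jordan K s.
Proof.
elim: s => [|m s IH] /=; first by rewrite /toK map_mx0.
by rewrite toK_block IH /jblock toK_bool.
Qed.

Lemma jordan_zo s : zero_one (jordan int s).
Proof. elim: s => [|m s IH] /=; [exact: zo0 | apply: zo_block IH; exact: zo_bool]. Qed.

Lemma part1 alpha : is_partition alpha ->
     exists (n : nat) (A : 'M[int]_n),
       [/\ nilpmx A,
           (forall K : fieldType, niso (toK K A) (jordan K alpha))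
         & exists P : 'M[int]_n, P \in unitmx /\ zero_one (P *m A *m invmx P)].
Proof.
move=> _; exists (sumn alpha), (jordan int alpha); split.
- exact: jordan_nilp.
- move=> K; exists 1%:M; rewrite row_free_unit row_full_unit unitmx1 mul1mx mulmx1.
  by rewrite jordan_toK.
- by exists 1%:M; rewrite unitmx1 invmx1 mul1mx mulmx1; split => //; exact: jordan_zo.
Qed.

Definition tK (K : fieldType) (t : trip int) : trip K :=
  Trip (toK K (tA t)) (toK K (tB t)) (toK K (tPsi t)).

Lemma tK_dsum (K : fieldType) t1 t2 : tK K (dsum t1 t2) = dsum (tK K t1) (tK K t2).
Proof. by rewrite /tK /dsum /= !toK_block. Qed.

Lemma tiso_refl (K : fieldType) (t : trip K) : tiso t t.
Proof.
rewrite /tiso; exists 1%:M; exists 1%:M; rewrite !row_free_unit !row_full_unit unitmx1.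
by rewrite !mul1mx !mulmx1 !unitmx1.
Qed.

Lemma tiso_dsum (K : fieldType) (t1 t2 s1 s2 : trip K) :
  tiso t1 s1 -> tiso t2 s2 -> tiso (dsum t1 t2) (dsum s1 s2).
Proof.
move=> [P1 [Q1 [HP1 HQ1 HA1 HB1 HS1]]] [P2 [Q2 [HP2 HQ2 HA2 HB2 HS2]]].
rewrite /tiso; exists (block_mx P1 0 0 P2); exists (block_mx Q1 0 0 Q2); split.
- move: HP1 HP2; rewrite /row_free /row_full /= rank_diag_block_mx.
  by move=> /andP[/eqP-> /eqP->] /andP[/eqP-> /eqP->]; rewrite !eqxx.
- move: HQ1 HQ2; rewrite /row_free /row_full /= rank_diag_block_mx.
  by move=> /andP[/eqP-> /eqP->] /andP[/eqP-> /eqP->]; rewrite !eqxx.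
- by rewrite /= !mulmx_block !mulmx0 !mul0mx !addr0 !add0r HA1 HA2.
- by rewrite /= !mulmx_block !mulmx0 !mul0mx !addr0 !add0r HB1 HB2.
- by rewrite /= !mulmx_block !mulmx0 !mul0mx !addr0 !add0r HS1 HS2.
Qed.

Definition good (p : piece) : bool :=
  if p is Bip m r then (1 <= r)%N && (r + 2 <= m)%N else true.

Lemma all_flatten (T : Type) (a : pred T) (ss : seq (seq T)) :
  all a (flatten ss) = all (all a) ss.
Proof. by elim: ss => //= s ss IH; rewrite all_cat IH. Qed.

Lemma pieces_good T : all good (pieces T).
Proof.
rewrite /pieces all_flatten all_map; apply/allP => m _ /=.
rewrite !all_cat !all_nseq /= !orbT /=.
apply/andP; split; first by case: ifP => // _; rewrite all_nseq orbT.
rewrite all_flatten all_map; apply/allP => r _ /=.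
rewrite all_nseq /mult_B /=; case: ifP => H; by rewrite ?H ?orbT.
Qed.

Definition Mp (R : nzRingType) (ps : seq piece) : trip R :=
  foldr (@dsum R) (trip0 R) (map (piece_trip R) ps).

Lemma Mp_tiso (K : fieldType) ps : tiso (tK K (Mp int ps)) (Mp K ps).
Proof.
elim: ps => [|p ps IH] /=.
  by rewrite /tK /= /toK !map_mx0; exact: tiso_refl.
rewrite tK_dsum; apply: tiso_dsum => //.
case: p => [l m|m r] /=; rewrite /tK /= /jblock ?toK_bool; first exact: tiso_refl.
by rewrite toK_block !toK_bool; exact: tiso_refl.
Qed.

Lemma Mp_comm (R : nzRingType) ps : all good ps ->
  tA (Mp R ps) *m tPsi (Mp R ps) = tPsi (Mp R ps) *m tB (Mp R ps).
Proof.
rewrite /Mp; elim: ps => [|p ps IH] //=.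
move=> /andP[Hp /IH {}IH].
rewrite !mulmx_block !mulmx0 !mul0mx !addr0 !add0r IH.
case: p Hp => [l m|m r] /=.
  by move=> _; rewrite (picket_comm R l m).
by move=> /andP[H1 H2]; rewrite (bipicket_comm R m r H1 H2).
Qed.

Lemma Mp_nilpA (R : nzRingType) ps : nilpmx (tA (Mp R ps)).
Proof.
elim: ps => [|p ps IH] /=; first exact: nilp0.
by apply: nilp_block IH; case: p => *; exact: nilp_jblock.
Qed.

Lemma Mp_nilpB (R : nzRingType) ps : nilpmx (tB (Mp R ps)).
Proof.
elim: ps => [|p ps IH] /=; first exact: nilp0.
apply: nilp_block IH; case: p => * /=; first exact: nilp_jblock.
by apply: nilp_block; exact: nilp_jblock.
Qed.

Lemma Mp_zo ps : zero_one (tPsi (Mp int ps)).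
Proof.
elim: ps => [|p ps IH] /=; first exact: zo0.
by apply: zo_block IH; case: p => * /=; exact: zo_bool.
Qed.

Theorem lemma5p1 :
  (* (1) *)
  (forall alpha : seq nat, is_partition alpha ->
     exists (n : nat) (A : 'M[int]_n),
       [/\ nilpmx A,
           (forall K : fieldType, niso (toK K A) (jordan K alpha))
         & exists P : 'M[int]_n, P \in unitmx /\ zero_one (P *m A *m invmx P)])
  /\
  (* (2) *)
  (forall Pi : ktab, is_klein2 Pi ->
     exists (n m : nat) (A : 'M[int]_n) (B : 'M[int]_m) (Psi : 'M[int]_(n, m)),
       [/\ nilpmx A, nilpmx B, A *m Psi = Psi *m B,
           (forall K : fieldType,
               tiso (Trip (toK K A) (toK K B) (toK K Psi)) (M_Pi K Pi))
         & exists (P : 'M[int]_n) (Q : 'M[int]_m),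
             [/\ P \in unitmx, Q \in unitmx & zero_one (P *m Psi *m invmx Q)]]).
Proof.
split; first exact: part1.
move=> Pi _; set t := Mp int (pieces Pi).
exists (tn t), (tm t), (tA t), (tB t), (tPsi t); split.
- exact: Mp_nilpA.
- exact: Mp_nilpB.
- exact: Mp_comm (pieces_good Pi).
- move=> K; exact: (Mp_tiso K (pieces Pi)).
- exists 1%:M, 1%:M; rewrite unitmx1 invmx1 mul1mx mulmx1; split => //.
  exact: unitmx1. exact: Mp_zo.
Qed.
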